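(* For all integers $t$ and $\Delta$, the class of finite graphs of treewidth at most $t$ and maximum degree at most $\Delta$ has asymptotic dimension at most $1$.
   Context: Graphs are metric spaces with the shortest-path distance. Treewidth is the minimum width of a tree-decomposition (width being the maximum bag size minus one). For a metric space $(X,d)$, a family $\mathcal U$ of subsets is $D$-bounded if every member has diameter at most $D$, and $r$-disjoint if points in different members are at distance $>r$. A function $D:\mathbb{R}^+\to\mathbb{R}^+$ is an $n$-dimensional control function for $X$ if for every $r>0$ there is a cover $\mathcal U=\mathcal U_1\cup\dots\cup\mathcal U_{n+1}$ of $X$ with each $\mathcal U_i$ $r$-disjoint and each member $D(r)$-bounded; a class has asymptotic dimension at most $n$ if one such function works for all its members. *)

(* Defs.v *)
From mathcomp Require Import all_boot.
From Stdlib Require Import Reals ZArith.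
Set Implicit Arguments. Unset Strict Implicit. Unset Printing Implicit Defensive.

Definition simple_graph (T : finType) (e : rel T) : Prop :=
  symmetric e /\ irreflexive e.

(* Shortest-path distance: dist(x,y) <= d  iff there is a walk from x to y
   of length n with n <= d (the minimum of the lengths is attained, so this
   is exactly "the shortest-path distance is at most d"; the distance is
   +infinity when no walk exists). *)
Definition dist_le (T : finType) (e : rel T) (x y : T) (d : R) : Prop :=
  exists p : seq T, path e x p /\ last x p = y /\ (INR (size p) <= d)%R.

Definition bounded_family (T : finType) (e : rel T) (D : R)
  (U : {set {set T}}) : Prop :=
  forall A, A \in U -> forall x y, x \in A -> y \in A -> dist_le e x y D.

Definition disjoint_family (T : finType) (e : rel T) (r : R)
  (U : {set {set T}}) : Prop :=
  forall A B, A \in U -> B \in U -> A != B ->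
  forall x y, x \in A -> y \in B -> ~ dist_le e x y r.

Definition control_function (n : nat) (D : R -> R) (T : finType) (e : rel T)
  : Prop :=
  forall r : R, (0 < r)%R ->
  exists U : 'I_n.+1 -> {set {set T}},
    (forall x : T, exists i, exists2 A, A \in U i & x \in A) /\
    (forall i, disjoint_family e r (U i)) /\
    (forall i, bounded_family e (D r) (U i)).

Definition asdim_le (C : forall T : finType, rel T -> Prop) (n : nat) : Prop :=
  exists D : R -> R, (forall r, (0 < r)%R -> (0 < D r)%R) /\
    forall (T : finType) (e : rel T), C T e -> control_function n D e.

Definition is_tree (I : finType) (te : rel I) : Prop :=
  simple_graph te /\ (0 < #|I|) /\
  (forall i j, connect te i j) /\
  (* no cycle x, p_1, ..., p_k (k >= 2) with x adjacent to p_k *)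
  (forall (x : I) (p : seq I),
      path te x p -> uniq (x :: p) -> 2 <= size p -> ~~ te (last x p) x).

Definition tree_decomposition (T : finType) (e : rel T)
  (I : finType) (te : rel I) (bag : I -> {set T}) : Prop :=
  is_tree te /\
  (forall v : T, exists i, v \in bag i) /\
  (forall u v : T, e u v -> exists i, (u \in bag i) && (v \in bag i)) /\
  (forall (v : T) (i j : I), v \in bag i -> v \in bag j ->
     connect [rel a b | [&& te a b, v \in bag a & v \in bag b]] i j).

Definition treewidth_le (T : finType) (e : rel T) (t : Z) : Prop :=
  exists (I : finType) (te : rel I) (bag : I -> {set T}),
    tree_decomposition e te bag /\
    forall i, (Z.of_nat #|bag i| - 1 <= t)%Z.

Definition maxdeg_le (T : finType) (e : rel T) (Delta : Z) : Prop :=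
  forall x : T, (Z.of_nat #|[set y | e x y]| <= Delta)%Z.

(* Main.v *)
Require Import Defs.
From mathcomp Require Import all_boot.
From Stdlib Require Import Reals ZArith.
From Stdlib Require Import Lia Lra IndefiniteDescription.
From mathcomp Require Import all_boot.
From mathcomp Require Import zify.
Set Implicit Arguments. Unset Strict Implicit. Unset Printing Implicit Defensive.

Lemma closed_connect (T : finType) (e1 e2 : rel T) (P : pred T) x y :
  P x -> (forall u v, P u -> e1 u v -> P v /\ e2 u v) ->
  connect e1 x y -> P y /\ connect e2 x y.
Proof.
move=> Px H /connectP [p]; elim: p x Px => [|z p IH] x Px /=.
  by move=> _ ->; split; [|exact: connect0].
case/andP=> exz pz ly; have [Pz e2xz] := H _ _ Px exz.
have [Py cz] := IH z Pz pz ly; split=> //.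
exact: connect_trans (connect1 e2xz) cz.
Qed.

Section Tree.
Variables (I : finType) (te : rel I).
Hypothesis Htree : is_tree te.

Definition avoid (i : I) : rel I := [rel a b | [&& te a b, a != i & b != i]].
Definition Side (i j : I) : {set I} := [set l | connect (avoid i) j l].

Lemma te_sym : symmetric te. Proof. by case: Htree => [[]]. Qed.
Lemma te_irr : irreflexive te. Proof. by case: Htree => [[]]. Qed.

Lemma avoid_sym i : symmetric (avoid i).
Proof. by move=> a b; rewrite /avoid /= [te a b]te_sym; case: (a != i); case: (b != i); rewrite ?andbT ?andbF. Qed.

Lemma side_disj i j l : te i j -> l \in Side i j -> l \in Side j i -> False.
Proof.
move=> tij; rewrite !inE => c1 c2.
set e' := [rel a b | [&& te a b, ~~ ((a == i) && (b == j)) & ~~ ((a == j) && (b == i))]].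
have s1 : subrel (avoid i) (connect e').
  move=> a b /= /and3P [tab ai bi]; apply: connect1.
  by rewrite /= tab (negbTE ai) (negbTE bi) /= andbF.
have s2 : subrel (avoid j) (connect e').
  move=> a b /= /and3P [tab aj bj]; apply: connect1.
  by rewrite /= tab (negbTE aj) (negbTE bj) /= andbF.
have c3 : connect e' j i.
  apply: (connect_trans (connect_sub s1 c1)).
  apply: (connect_sub s2).
  by rewrite (sym_connect_sym (@avoid_sym j)).
have ij : i != j by apply/eqP=> eij; move: tij; rewrite eij te_irr.
case/connectP: c3 => p pp lp.
move: lp; case: (shortenP pp) => p' pp' up' _ lp'.
have pte : path te j p'.
  by apply: sub_path pp' => a b /andP [].
case: p' pp' up' lp' pte => [|a [|b q]] pp' up' lp' pte.
- by move: lp'; rewrite /= => eji; move: ij; rewrite eji eqxx.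
- by move: lp' pp' => /= ->; rewrite !eqxx /= !andbF.
- case: Htree => _ [_ [_ acyc]].
  have := acyc j [:: a, b & q] pte up' isT.
  by rewrite -lp' tij.
Qed.


Lemma side_cover j m : m != j -> exists l, te j l /\ m \in Side j l.
Proof.
move=> mj; case: Htree => _ [_ [conn _]].
move: (conn j m) => /connectP [p pp lp].
move: lp; case: (shortenP pp) => p' pp' up' _ lp.
case: p' pp' up' lp => [|l q] /=; first by move=> _ _ mj'; move: mj; rewrite mj' eqxx.
case/andP=> tjl pq; rewrite inE negb_or => /andP [/andP [jl jq] _] mq.
exists l; split=> //; rewrite inE; apply/connectP; exists q => //.
apply: (sub_in_path (P := predC1 j)) pq.
  move=> a b; rewrite !inE => aj bj tab; by rewrite /avoid /= tab aj bj.
by rewrite /= eq_sym jl /=; apply/allP => z zq; rewrite !inE; apply: contraNneq jq => <-.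
Qed.

Lemma side_nj j l : l != j -> j \notin Side j l.
Proof.
move=> lj; rewrite inE; apply/negP => /connectP [q pq].
case/lastP: q pq => [|q y] /=; first by move=> _ jl; move: lj; rewrite -jl eqxx.
rewrite rcons_path last_rcons => /andP [_ /and3P [_ _ yj]] jy.
by move: yj; rewrite -jy eqxx.
Qed.

Lemma side_in i j x y : connect (avoid i) x y -> x \in Side i j -> y \in Side i j.
Proof. by rewrite !inE => cxy cjx; exact: connect_trans cjx cxy. Qed.

Lemma side_sub i j l : te i j -> te j l -> l != i -> Side j l \proper Side i j.
Proof.
move=> tij tjl li.
have ji : j != i by apply/eqP=> eji; move: tij; rewrite eji te_irr.
have lj : l != j by apply/eqP=> elj; move: tjl; rewrite elj te_irr.
apply/properP; split; last first.
  by exists j; [rewrite inE connect0 | exact: side_nj].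
apply/subsetP => x; rewrite inE => /connectP [q pq ->].
have iq : i \notin l :: q.
  apply/negP => /(path_connect pq) cli.
  apply: (side_disj tij (l := l)).
    by rewrite inE; apply: connect1; rewrite /avoid /= tjl ji li.
  by rewrite inE (sym_connect_sym (@avoid_sym j)).
have pq' : path (avoid i) l q.
  apply: (sub_in_path (P := predC1 i)) pq.
    by move=> a b; rewrite !inE => ai bi /and3P [tab _ _]; rewrite /avoid /= tab ai bi.
  by apply/allP => z zq; rewrite !inE; apply: contraNneq iq => <-.
rewrite inE; apply: (connect_trans (y := l)).
  by apply: connect1; rewrite /avoid /= tjl ji li.
by apply/connectP; exists q.
Qed.

End Tree.

Lemma card_setU_le (T : finType) (A B : {set T}) : #|A :|: B| <= #|A| + #|B|.
Proof. have := cardsUI A B; lia. Qed.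

Section Comp.
Variables (T : finType) (h : rel T).
Definition hrel (S : {set T}) : rel T := [rel u v | [&& u \in S, v \in S & h u v]].
Definition comp (S : {set T}) (x : T) : {set T} := [set y | connect (hrel S) x y].
End Comp.

Section Sep.
Variables (T : finType) (h : rel T) (I : finType) (te : rel I) (bag : I -> {set T}).
Hypothesis Hsym : symmetric h.
Hypothesis Htd : tree_decomposition h te bag.
Variables (K tau : nat).
Hypothesis HK : forall i, #|bag i| <= K.

Let Htree : is_tree te. Proof. by case: Htd. Qed.

Definition hasin (S : {set I}) (x : T) := [exists a in S, x \in bag a].
Definition Vf (W : {set T}) i j := [set x in W | hasin (Side te i j) x].

Lemma node_avoid j x a b : x \notin bag j -> x \in bag a -> x \in bag b ->
  connect (avoid te j) a b.
Proof.
move=> xj xa xb; case: Htd => _ [_ [_ conn]].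
apply: connect_sub (conn x a b xa xb) => u v /and3P [tuv xu xv].
apply: connect1; rewrite /avoid /= tuv /=.
by apply/andP; split; apply/eqP => ej; [move: xu | move: xv]; rewrite ej (negbTE xj).
Qed.

Lemma edge_side j l x y : x \notin bag j -> y \notin bag j -> h x y ->
  hasin (Side te j l) x -> hasin (Side te j l) y.
Proof.
move=> xj yj hxy /existsP [a /andP [aS xa]].
case: Htd => _ [_ [cov _]]; have [m /andP [xm ym]] := cov _ _ hxy.
apply/existsP; exists m; rewrite ym andbT.
exact: side_in (node_avoid xj xa xm) aS.
Qed.

Lemma comp_side (W X : {set T}) (j l : I) (x : T) : bag j :&: W \subset X -> x \in W :\: X ->
  hasin (Side te j l) x -> forall y, y \in comp h (W :\: X) x ->
  (y \in W :\: X) && hasin (Side te j l) y.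
Proof.
move=> sX xWX hx y; rewrite inE => cxy.
have nb : forall u, u \in W :\: X -> u \notin bag j.
  move=> u; rewrite inE => /andP [uX uW]; apply: contra uX => ub.
  by apply: (subsetP sX); rewrite inE ub uW.
have := closed_connect (P := [pred y | (y \in W :\: X) && hasin (Side te j l) y])
   (e2 := hrel h (W :\: X)) _ _ cxy.
case=> //; first by rewrite /= xWX hx.
move=> u v /andP [uWX hu] huv'; have /and3P [_ vWX huv] := huv'; split=> //.
by rewrite /= vWX; apply: edge_side huv hu; apply: nb.
Qed.

Lemma multiway N : forall W A : {set T}, A \subset W -> #|A| <= N ->
  exists X : {set T}, [/\ X \subset W, tau * #|X| <= K * #|A| &
     forall x, x \in W :\: X -> #|A :&: comp h (W :\: X) x| <= tau].
Proof.
elim: N => [|N IH] W A AW cA.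
  exists set0; split; [exact: sub0set| by rewrite cards0 muln0 |].
  move=> x _; apply: leq_trans (subset_leq_card (subsetIl _ _)) _; lia.
case: (leqP #|A| tau) => [small|big].
  exists set0; split; [exact: sub0set| by rewrite cards0 muln0 |].
  by move=> x _; apply: leq_trans (subset_leq_card (subsetIl _ _)) small.
have [j0 _] : exists j0 : I, true.
  by case: Htree => _ [/card_gt0P [j0 _] _]; exists j0.
have nb : forall (X : {set T}) j u, bag j :&: W \subset X -> u \in W :\: X -> u \notin bag j.
  move=> X j u sX; rewrite inE => /andP [uX uW]; apply: contra uX => ub.
  by apply: (subsetP sX); rewrite inE ub uW.
have xnode : forall u, exists m, u \in bag m by case: Htd => _ [cov _].
have getside : forall (X : {set T}) j x, bag j :&: W \subset X -> x \in W :\: X ->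
    exists l, te j l /\ hasin (Side te j l) x.
  move=> X j x sX xWX; have xj := nb _ _ _ sX xWX.
  have [m xm] := xnode x.
  have mj : m != j by apply/eqP => emj; move: xm; rewrite emj (negbTE xj).
  have [l [tjl ml]] := side_cover Htree mj.
  by exists l; split=> //; apply/existsP; exists m; rewrite ml xm.
have subVf : forall (X : {set T}) j l x, bag j :&: W \subset X -> x \in W :\: X ->
    hasin (Side te j l) x -> comp h (W :\: X) x \subset Vf W j l.
  move=> X j l x sX xWX hx; apply/subsetP => y yc.
  have /andP [yWX hy] := comp_side sX xWX hx yc.
  by rewrite inE hy andbT; move: yWX; rewrite inE => /andP [].
case: (pickP [pred p : I * I | te p.1 p.2 && (tau < #|A :&: Vf W p.1 p.2|)]) => [p0 hp0 | noheavy]; last first.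
  exists (bag j0 :&: W); split.
  - exact: subsetIr.
  - have := HK j0; have := subset_leq_card (subsetIl (bag j0) W); nia.
  - move=> x xWX; have [l [tjl hx]] := getside _ _ _ (subxx _) xWX.
    have := noheavy (j0, l); rewrite /= tjl /= => /negbT; rewrite -leqNgt => hl.
    apply: leq_trans hl; apply: subset_leq_card; apply: setIS.
    exact: subVf (subxx _) xWX hx.
case: (arg_minnP (fun p : I * I => #|Side te p.1 p.2|) hp0) => [[i j]] /= /andP [tij hv] pmin.
set W' := [set x in W :\: bag j | hasin (Side te j i) x].
set A' := A :&: W'.
have disj : A' \subset A :\: Vf W i j.
  apply/subsetP => x; rewrite !inE => /andP [xA /andP [/andP [xj xW] hx]].
  rewrite xA andbT xW /=; apply/negP => hx2.
  case/existsP: hx => a /andP [aS xa]; case/existsP: hx2 => b /andP [bS xb].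
  have bS' := side_in (node_avoid xj xa xb) aS.
  exact: (@side_disj I te Htree i j b tij bS bS').
have cA' : #|A'| + #|A :&: Vf W i j| <= #|A|.
  have := cardsID (Vf W i j) A; have := subset_leq_card disj; lia.
have [X' [X'W' bX' cX']] := IH W' A' (subsetIr _ _) ltac:(lia).
have sX : bag j :&: W \subset (bag j :&: W) :|: X' by apply: subsetUl.
exists ((bag j :&: W) :|: X'); split.
- rewrite subUset subsetIr /=; apply: subset_trans X'W' _.
  by apply/subsetP => x; rewrite !inE => /andP [/andP [_ xW] _].
- have := card_setU_le (bag j :&: W) X'; have := subset_leq_card (subsetIl (bag j) W); have := HK j. nia.
- move=> x xWX; have [l [tjl hx]] := getside _ _ _ sX xWX.
  case: (eqVneq l i) => [eli | nli].
  + subst l.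
    have inW' : forall u, u \in W :\: (bag j :&: W :|: X') -> hasin (Side te j i) u ->
        u \in W' :\: X'.
      move=> u uWX hu; have uj := nb _ _ _ sX uWX.
      move: uWX; rewrite !inE uj hu /= negb_or => /andP [/andP [_ uX'] uW].
      by rewrite uX' uW.
    have sub : A :&: comp h (W :\: (bag j :&: W :|: X')) x \subset A' :&: comp h (W' :\: X') x.
      apply/subsetP => y; rewrite inE => /andP [yA yc].
      have /andP [yWX hy] := comp_side sX xWX hx yc.
      rewrite !inE yA /=; apply/andP; split.
        by have := inW' _ yWX hy; rewrite !inE => /andP [_ ->].
      move: yc; rewrite inE => cxy.
      have := closed_connect (P := [pred y | (y \in W :\: (bag j :&: W :|: X')) && hasin (Side te j i) y])
         (e2 := hrel h (W' :\: X')) _ _ cxy.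
      case=> //; first by rewrite /= xWX hx.
      move=> u v /andP [uWX hu] /and3P [_ vWX huv].
      have hv' : hasin (Side te j i) v.
        by apply: edge_side huv hu; apply: nb sX _.
      split; first by rewrite /= vWX hv'.
      by rewrite /hrel /= inW' // inW' //.
    apply: leq_trans (subset_leq_card sub) _.
    by apply: cX'; apply: inW'.
  + have nh : #|A :&: Vf W j l| <= tau.
      rewrite leqNgt; apply/negP => hh.
      have := pmin (j, l); rewrite /= tjl hh => /(_ isT).
      have := proper_card (side_sub Htree tij tjl nli); lia.
    apply: leq_trans nh; apply: subset_leq_card; apply: setIS.
    exact: subVf sX xWX hx.
Qed.

End Sep.

Section Color.
Variables (T : finType) (h : rel T).
Hypothesis Hsym : symmetric h.

Definition Nb (S : {set T}) : {set T} := [set z | [exists u in S, h u z]].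

Lemma card_Nb d : (forall x, #|[set y | h x y]| <= d) ->
  forall S, #|Nb S| <= d * #|S|.
Proof.
move=> Hd S; move: {2}#|S| (erefl #|S|) => n; elim: n S => [|n IH] S cS.
  have -> : S = set0 by apply/eqP; rewrite -cards_eq0 cS.
  rewrite cards0 muln0 leqn0 cards_eq0; apply/eqP/setP => z; rewrite !inE.
  by apply/existsP => [[u]]; rewrite inE.
have [x xS] : exists x, x \in S by apply/set0Pn; rewrite -cards_eq0 cS.
have sub : Nb S \subset [set y | h x y] :|: Nb (S :\ x).
  apply/subsetP => z; rewrite !inE => /existsP [u /andP [uS huz]].
  case: (eqVneq u x) => [eux | nux]; first by rewrite -eux huz.
  by apply/orP; right; apply/existsP; exists u; rewrite !inE nux uS.
have c1 : #|S :\ x| = n by have := cardsD1 x S; rewrite xS cS; lia.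
have := IH _ c1; have := card_setU_le [set y | h x y] (Nb (S :\ x));
  have := subset_leq_card sub; have := Hd x; nia.
Qed.

Definition mrel (W : {set T}) (col : T -> bool) : rel T :=
  [rel u v | [&& u \in W, v \in W, h u v & col u == col v]].
Definition mcomp W col x := [set y | connect (mrel W col) x y].

Lemma comp_sub (S : {set T}) x : x \in S -> comp h S x \subset S.
Proof.
move=> xS; apply/subsetP => y; rewrite inE => cxy.
have := closed_connect (P := mem S) (e2 := hrel h S) xS _ cxy.
by case=> // u v _ huv; move/and3P: (huv) => [_ vS _].
Qed.

Lemma hrel_sym S : symmetric (hrel h S).
Proof. by move=> u v; rewrite /hrel /= Hsym; case: (u \in S); case: (v \in S). Qed.

Lemma comp_eq (S : {set T}) x u : u \in comp h S x -> comp h S u = comp h S x.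
Proof.
rewrite inE => cxu; apply/setP => z; rewrite !inE.
apply/idP/idP => c.
  exact: connect_trans cxu c.
by rewrite (sym_connect_sym (@hrel_sym S)) in cxu; exact: connect_trans cxu c.
Qed.

End Color.

Section Build.
Variables (T : finType) (h : rel T) (I : finType) (te : rel I) (bag : I -> {set T}).
Hypothesis Hsym : symmetric h.
Hypothesis Htd : tree_decomposition h te bag.
Variables (K d : nat).
Hypothesis HK : forall i, #|bag i| <= K.
Hypothesis Hd : forall x, #|[set y | h x y]| <= d.
Hypothesis Kpos : 0 < K.
Hypothesis dpos : 0 < d.

Definition tauB := 2 * d * K.
Definition sB := 4 * d * d * K + 1.
Definition wB := 2 * sB + 2.

Lemma build N : forall (W A : {set T}) (b : bool), #|W| <= N -> A \subset W -> #|A| <= sB ->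
  exists col : T -> bool, (forall a, a \in A -> col a = b) /\
    (forall x, x \in W -> #|mcomp h W col x| <= wB).
Proof.
elim: N => [|N IH] W A b cW AW cA.
  exists (fun=> b); split=> // x xW; have : 0 < #|W| by apply/card_gt0P; exists x.
  lia.
case: (set_0Vmem W) => [W0 | [w0 w0W]].
  by exists (fun=> b); split=> // x; rewrite W0 inE.
set Ap := A :|: [set w0].
have ApW : Ap \subset W by rewrite subUset AW sub1set w0W.
have cAp : #|Ap| <= sB + 1 by rewrite /Ap; have := card_setU_le A [set w0]; rewrite cards1; lia.
have [X [XW bX cX]] := @multiway T h I te bag Htd K tauB HK #|Ap| W Ap ApW (leqnn _).
have bX2 : 2 * d * #|X| <= sB + 1.
  have : K * (2 * d * #|X|) <= K * (sB + 1).
    by move: bX; rewrite /tauB; have := leq_mul (leqnn K) cAp; nia.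
  by rewrite leq_pmul2l.
set R := Ap :|: X.
have RW : R \subset W by rewrite subUset ApW XW.
have w0R : w0 \in R by rewrite !inE eqxx orbT.
set AC := fun C : {set T} => [set z in C | [exists u in R, h u z]].
have HC : forall C : {set T}, exists col : T -> bool,
    [exists y in W :\: R, C == comp h (W :\: R) y] ->
    (forall a, a \in AC C -> col a = ~~ b) /\ (forall x, x \in C -> #|mcomp h C col x| <= wB).
  move=> C; case: (boolP [exists y in W :\: R, C == comp h (W :\: R) y]); last first.
    by move=> nC; exists (fun=> b) => hC; case/negP: nC.
  case/existsP => y /andP [yWR /eqP eC].
  have CWR : C \subset W :\: R by rewrite eC; exact: comp_sub.
  have cC : #|C| <= N.
    have : C \proper W.
      apply/properP; split; first by apply: subset_trans CWR (subsetDl _ _).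
      exists w0 => //; apply/negP => /(subsetP CWR); by rewrite inE w0R.
    move/proper_card; lia.
  have ACC : AC C \subset C by apply/subsetP => z; rewrite inE => /andP [].
  have cAC : #|AC C| <= sB.
    have sub : AC C \subset Nb h (X :|: (Ap :&: comp h (W :\: X) y)).
      apply/subsetP => z; rewrite !inE => /andP [zC /existsP [u /andP [uR huz]]].
      apply/existsP; exists u; rewrite huz andbT !inE.
      case: (boolP (u \in X)) => //= uX.
      have uAp : u \in Ap by move: uR; rewrite inE (negbTE uX) orbF.
      move: (uAp); rewrite !inE => ->; rewrite /=.
      have zWR := subsetP CWR _ zC.
      have sWRX : W :\: R \subset W :\: X.
        by apply: setDS; apply: subsetUr.
      have zC' : z \in comp h (W :\: R) y by rewrite -eC.
      move: zC'; rewrite inE => cyz.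
      apply: (connect_trans (y := z)).
        apply: connect_sub cyz => a c /and3P [aS cS hac]; apply: connect1.
        by rewrite /hrel /= (subsetP sWRX _ aS) (subsetP sWRX _ cS).
      apply: connect1; rewrite /hrel /= (subsetP sWRX _ zWR) Hsym huz andbT.
      by rewrite inE uX (subsetP ApW _ uAp).
    have yWX : y \in W :\: X.
      by apply: (subsetP (setDS W (subsetUr Ap X))).
    have c1 := cX y yWX.
    have c2 := card_Nb Hd (X :|: (Ap :&: comp h (W :\: X) y)).
    have c3 := card_setU_le X (Ap :&: comp h (W :\: X) y).
    have c4 := subset_leq_card sub.
    move: bX2 c1 c2 c3 c4; rewrite /tauB /sB; nia.
  have [col [c1 c2]] := IH C (AC C) (~~ b) cC ACC cAC.
  by exists col.
set F := fun C => proj1_sig (constructive_indefinite_description _ (HC C)).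
have FP : forall y, y \in W :\: R ->
    (forall a, a \in AC (comp h (W :\: R) y) -> F (comp h (W :\: R) y) a = ~~ b) /\
    (forall x, x \in comp h (W :\: R) y -> #|mcomp h (comp h (W :\: R) y) (F (comp h (W :\: R) y)) x| <= wB).
  move=> y yWR; rewrite /F; case: constructive_indefinite_description => col /= P.
  by apply: P; apply/existsP; exists y; rewrite yWR eqxx.
exists (fun z => if z \in R then b else F (comp h (W :\: R) z) z); split.
  by move=> a aA; rewrite ifT // !inE aA.
move=> x xW.
set col' := (fun z => if z \in R then b else F (comp h (W :\: R) z) z).
case: (boolP (x \in R)) => xR.
  have sub : mcomp h W col' x \subset R.
    apply/subsetP => y; rewrite inE => cxy.
    have := closed_connect (P := mem R) (e2 := mrel h W col') xR _ cxy.
    case=> // u v uR huv; split=> //.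
    move/and4P: (huv) => [_ vW huv' ceq].
    apply/negPn/negP => vR.
    have vWR : v \in W :\: R by rewrite inE vR vW.
    have [P1 _] := FP v vWR.
    have : v \in AC (comp h (W :\: R) v).
      rewrite inE; apply/andP; split; first by rewrite inE connect0.
      by apply/existsP; exists u; rewrite huv' andbT.
    move/P1 => Fv.
    have uR' : u \in R := uR.
    move: ceq; rewrite /col' uR'; case: ifP => [vR2|_]; first by case/negP: vR. by rewrite Fv; case: (b).
  apply: leq_trans (subset_leq_card sub) _.
  have := card_setU_le Ap X; rewrite -/R.
  have : #|X| <= sB + 1 by move: bX2; nia.
  move: cAp; rewrite /wB; lia.
have xWR : x \in W :\: R by rewrite inE xR xW.
have [P1 P2] := FP x xWR.
set C := comp h (W :\: R) x.
have xC : x \in C by rewrite inE connect0.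
have CWR : C \subset W :\: R := comp_sub h xWR.
have sub : mcomp h W col' x \subset mcomp h C (F C) x.
  apply/subsetP => y; rewrite !inE => cxy.
  have := closed_connect (P := mem C) (e2 := mrel h C (F C)) xC _ cxy.
  case=> // u v uC0 huv; have uC : u \in C := uC0.
  move/and4P: (huv) => [uW vW huv' ceq].
  have uWR := subsetP CWR _ uC.
  have cu : comp h (W :\: R) u = C := comp_eq Hsym uC.
  have uR : u \notin R by move: uWR; rewrite inE => /andP [].
  have colu : col' u = F C u by rewrite /col' (negbTE uR) cu.
  have vR : v \notin R.
    apply/negP => vR.
    have : u \in AC C by rewrite inE uC; apply/existsP; exists v; rewrite vR Hsym huv'.
    move/P1 => Fu. move: ceq; rewrite colu Fu /col'; case: ifP => [_|vR2]; last by case/negP: vR2. by case: (b).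
  have vWR : v \in W :\: R by rewrite inE vR vW.
  have vC : v \in C.
    move: (uC); rewrite !inE => cxu; apply: connect_trans cxu (connect1 _).
    by rewrite /hrel /= uWR vWR huv'.
  have cv : comp h (W :\: R) v = C := comp_eq Hsym vC.
  have colv : col' v = F C v by rewrite /col' (negbTE vR) cv.
  split=> //. by rewrite /mrel /= uC vC huv' -colu -colv.
apply: leq_trans (subset_leq_card sub) _; exact: P2.
Qed.

End Build.

Lemma card_U (T : finType) (f : T -> {set T}) c : (forall x, #|f x| <= c) ->
  forall S : {set T}, #|[set z | [exists u in S, z \in f u]]| <= #|S| * c.
Proof.
move=> Hd S; move: {2}#|S| (erefl #|S|) => n; elim: n S => [|n IH] S cS.
  have -> : S = set0 by apply/eqP; rewrite -cards_eq0 cS.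
  rewrite cards0 mul0n leqn0 cards_eq0; apply/eqP/setP => z; rewrite !inE.
  by apply/existsP => [[u]]; rewrite inE.
have [x xS] : exists x, x \in S by apply/set0Pn; rewrite -cards_eq0 cS.
have sub : [set z | [exists u in S, z \in f u]] \subset f x :|: [set z | [exists u in S :\ x, z \in f u]].
  apply/subsetP => z; rewrite !inE => /existsP [u /andP [uS huz]].
  case: (eqVneq u x) => [eux | nux]; first by rewrite -eux huz.
  by apply/orP; right; apply/existsP; exists u; rewrite !inE nux uS.
have c1 : #|S :\ x| = n by have := cardsD1 x S; rewrite xS cS; lia.
have := IH _ c1; have := card_setU_le (f x) [set z | [exists u in S :\ x, z \in f u]].
have := subset_leq_card sub; have := Hd x; rewrite cS; nia.
Qed.

Section Ball.
Variables (T : finType) (e : rel T).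
Hypothesis Hsym : symmetric e.

Fixpoint ball n x : {set T} :=
  if n is n'.+1 then ball n' x :|: Nb e (ball n' x) else [set x].

Lemma ball_walk n x y :
  y \in ball n x <-> exists p, [/\ path e x p, last x p = y & size p <= n].
Proof.
split.
  elim: n y => [|n IH] y /=; first by rewrite inE => /eqP ->; exists [::].
  rewrite inE => /orP [/IH [p [pp lp sp]] | ]; first by exists p; split=> //; lia.
  rewrite inE => /existsP [u /andP [/IH [p [pp lp sp]] euy]].
  exists (rcons p y); rewrite rcons_path last_rcons size_rcons pp lp euy; split=> //.
elim: n y => [|n IH] y [p [pp lp sp]] /=.
  by case: p pp lp sp => //= _ <- _; rewrite inE.
case/lastP: p pp lp sp => [|q z] /=.
  move=> _ <- _; rewrite inE; apply/orP; left; apply: IH; by exists [::].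
rewrite rcons_path last_rcons size_rcons => /andP [pq ez] <- sq.
rewrite !inE; apply/orP; right; apply/existsP; exists (last x q).
rewrite ez andbT; apply: IH; exists q; split=> //.
Qed.

Lemma ball_mono m n x y : m <= n -> y \in ball m x -> y \in ball n x.
Proof.
move=> mn /ball_walk [p [pp lp sp]]; apply/ball_walk; exists p; split=> //; lia.
Qed.

Lemma walk_rev x p : path e x p ->
  exists q, [/\ path e (last x p) q, last (last x p) q = x & size q = size p].
Proof.
elim: p x => [|z p IH] x /=; first by move=> _; exists [::].
case/andP=> exz pp; have [q [pq lq sq]] := IH z pp.
exists (rcons q x); rewrite rcons_path last_rcons size_rcons pq lq Hsym exz sq.
by split.
Qed.

Lemma ball_sym n x y : y \in ball n x -> x \in ball n y.
Proof.
move=> /ball_walk [p [pp lp sp]]; have [q [pq lq sq]] := walk_rev pp.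
apply/ball_walk; exists q; rewrite -lp; split=> //; lia.
Qed.

Lemma card_ball d : (forall x, #|[set y | e x y]| <= d) ->
  forall n x, #|ball n x| <= (d + 1) ^ n.
Proof.
move=> Hd; elim=> [|n IH] x; first by rewrite /= cards1.
rewrite expnS [ball _.+1 _]/=.
have := card_setU_le (ball n x) (Nb e (ball n x)).
have := card_Nb Hd (ball n x); have := IH x; nia.
Qed.

End Ball.

Section BallTD.
Variables (T : finType) (e : rel T) (I : finType) (te : rel I) (bag : I -> {set T}).
Hypothesis Hsym : symmetric e.
Hypothesis Htd : tree_decomposition e te bag.
Variable n : nat.

Definition hb : rel T := fun x y => y \in ball e n x.
Definition bagb i : {set T} := [set u | [exists w in bag i, u \in ball e n w]].

Lemma in_ball0 x : x \in ball e n x.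
Proof. by apply: (ball_mono (m := 0)) => //=; rewrite inE. Qed.

Lemma bagb_in i w u : w \in bag i -> u \in ball e n w -> u \in bagb i.
Proof. by move=> wi uw; rewrite inE; apply/existsP; exists w; rewrite wi. Qed.

Lemma td_ball : tree_decomposition hb te bagb.
Proof.
case: Htd => tr [cov [edg conn]].
split=> //; split.
  move=> v; have [i vi] := cov v; exists i; exact: bagb_in vi (in_ball0 v).
split.
  move=> u v huv; have [i ui] := cov u; exists i.
  by rewrite (bagb_in ui (in_ball0 u)) (bagb_in ui huv).
move=> u.
have [a0 ua0] := cov u.
set Eu := [rel a b | [&& te a b, u \in bagb a & u \in bagb b]].
have key : forall m, m <= n -> forall x, x \in ball e m u -> forall a, x \in bag a ->
    connect Eu a0 a.
  elim=> [|m IH] mn x /=.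
    rewrite inE => /eqP -> a ua.
    apply: connect_sub (conn u a0 a ua0 ua) => b c /and3P [tbc ub uc].
    by apply: connect1; rewrite /= tbc (bagb_in ub (in_ball0 u)) (bagb_in uc (in_ball0 u)).
  rewrite inE => /orP [xm | ]; first by apply: IH => //; lia.
  rewrite inE => /existsP [y /andP [ym eyx]] a xa.
  have [b /andP [yb xb]] := edg _ _ eyx.
  apply: connect_trans (IH ltac:(lia) y ym b yb) _.
  have xn : x \in ball e n u.
    apply: (ball_mono (m := m.+1)) => //=; rewrite !inE; apply/orP; right.
    by apply/existsP; exists y; rewrite ym eyx.
  have ux := ball_sym Hsym xn.
  apply: connect_sub (conn x b a xb xa) => c c' /and3P [tcc' xc xc'].
  by apply: connect1; rewrite /= tcc' (bagb_in xc ux) (bagb_in xc' ux).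
have Esym : symmetric Eu.
  move=> a b; rewrite /= (te_sym tr a b).
  by case: (u \in bagb a); case: (u \in bagb b); rewrite ?andbF.
move=> i j; rewrite !inE => /existsP [w1 /andP [w1i uw1]] /existsP [w2 /andP [w2j uw2]].
have c1 := key n (leqnn n) w1 (ball_sym Hsym uw1) i w1i.
have c2 := key n (leqnn n) w2 (ball_sym Hsym uw2) j w2j.
rewrite (sym_connect_sym Esym) in c1.
exact: connect_trans c1 c2.
Qed.

End BallTD.

Section Final.
Variables (T : finType) (h : rel T).
Hypothesis Hsym : symmetric h.

Lemma mrel_sym W col : symmetric (mrel h W col).
Proof.
move=> u v; rewrite /mrel /= Hsym [col u == _]eq_sym.
by case: (u \in W); case: (v \in W).
Qed.

Lemma mcomp_col W col x y : y \in mcomp h W col x -> col y = col x.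
Proof.
rewrite inE => cxy.
have := closed_connect (P := [pred z | col z == col x]) (e2 := mrel h W col) (eqxx _) _ cxy.
case; last by move=> /eqP.
move=> u v /= /eqP cu huv; split=> //; move/and4P: (huv) => [_ _ _ /eqP cuv].
by rewrite /= -cuv cu.
Qed.

Lemma mcomp_eq W col x y : y \in mcomp h W col x -> mcomp h W col y = mcomp h W col x.
Proof.
rewrite inE => cxy; apply/setP => z; rewrite !inE; apply/idP/idP => c.
  exact: connect_trans cxy c.
by rewrite (sym_connect_sym (@mrel_sym W col)) in cxy; exact: connect_trans cxy c.
Qed.

Lemma mcomp_self W col x : x \in mcomp h W col x.
Proof. by rewrite inE connect0. Qed.

End Final.

Lemma mwalk (T : finType) (e : rel T) n W col x p :
  path (mrel (hb e n) W col) x p ->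
  exists q, [/\ path e x q, last x q = last x p & size q <= n * size p].
Proof.
elim: p x => [|z p IH] x /=; first by move=> _; exists [::]; split.
case/andP => /and4P [_ _ hxz _] pp.
have [q1 [pq1 lq1 sq1]] := (ball_walk e n x z).1 hxz.
have [q2 [pq2 lq2 sq2]] := IH z pp.
exists (q1 ++ q2); rewrite cat_path last_cat lq1 pq1 pq2 lq2 size_cat; split=> //.
rewrite mulnS; lia.
Qed.

Definition nR (r : R) : nat := Z.to_nat (up r).
Definition Kn (t Delta : Z) (n : nat) : nat := Z.to_nat (t + 1) * (Z.to_nat Delta + 1) ^ n + 1.
Definition dn (Delta : Z) (n : nat) : nat := (Z.to_nat Delta + 1) ^ n.
Definition Dfun (t Delta : Z) (r : R) : R :=
  Rplus (INR (nR r * wB (Kn t Delta (nR r)) (dn Delta (nR r)))) 1.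

Lemma size_le_nR (r : R) k : Rle (INR k) r -> k <= nR r.
Proof.
move=> kr; have [ur _] := archimed r.
have : Rlt (IZR (Z.of_nat k)) (IZR (up r)) by rewrite -INR_IZR_INZ; lra.
move/lt_IZR; rewrite /nR; lia.
Qed.

Theorem theorem5p5 (t Delta : Z) :
  asdim_le (fun (T : finType) (e : rel T) =>
              simple_graph e /\ treewidth_le e t /\ maxdeg_le e Delta) 1.
Proof.
exists (Dfun t Delta); split.
  by move=> r _; rewrite /Dfun; have := pos_INR (nR r * wB (Kn t Delta (nR r)) (dn Delta (nR r))); lra.
move=> T e [[esym eirr] [[I [te [bag [Htd Hw]]]] Hdeg]] r rpos.
set n := nR r.
have Hd : forall x, #|[set y | e x y]| <= Z.to_nat Delta.
  by move=> x; have := Hdeg x; lia.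
have HK : forall i, #|bagb e bag n i| <= Kn t Delta n.
  move=> i; have := card_U (card_ball Hd n) (bag i).
  have := Hw i; rewrite /Kn /bagb; nia.
have Hd' : forall x, #|[set y | hb e n x y]| <= dn Delta n.
  move=> x; have -> : [set y | hb e n x y] = ball e n x by apply/setP => y; rewrite inE.
  exact: card_ball Hd n x.
have hsym : symmetric (hb e n).
  by move=> x y; apply/idP/idP => /(ball_sym esym).
have Kpos : 0 < Kn t Delta n by rewrite /Kn; lia.
have dpos : 0 < dn Delta n by rewrite /dn expn_gt0 addn1.
have [col [_ Hc]] := build hsym (td_ball esym Htd n) HK Hd' Kpos dpos true
   (N := #|T|) (W := setT) (A := set0) (max_card _) (sub0set _) ltac:(rewrite cards0; lia).
set w := wB (Kn t Delta n) (dn Delta n).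
set M := mcomp (hb e n) setT col.
exists (fun i : 'I_2 => [set M x | x in [set x | col x == (nat_of_ord i == 1)]]).
split.
  move=> x; exists (if col x then Ordinal (isT : 1 < 2) else ord0), (M x).
    by apply/imsetP; exists x => //; rewrite inE; case: (col x).
  exact: mcomp_self.
split.
  move=> i A B /imsetP [x1 hx1 ->] /imsetP [x2 hx2 ->] AB x y xA yB [p [pp [lp sp]]].
  have hxy : hb e n x y by apply/(ball_walk e n x y); exists p; split=> //; exact: size_le_nR.
  have cx := mcomp_col xA; have cy := mcomp_col yB.
  have ex1 := mcomp_eq hsym xA.
  have ey2 := mcomp_eq hsym yB.
  move: hx1 hx2; rewrite !inE => /eqP c1 /eqP c2.
  have yx : y \in M x.
    rewrite inE; apply: connect1; rewrite /mrel /= !inE hxy cx cy c1 c2 eqxx.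
    done.
  have := mcomp_eq hsym yx; rewrite ey2 ex1 => E.
  by move: AB; rewrite /M E eqxx.
move=> i A /imsetP [x1 _ ->] x y xA yA.
have ex := mcomp_eq hsym xA.
move: yA; rewrite /M -ex inE => /connectP [p pp ->].
case: (shortenP pp) => p' pp' up' _.
have sz : size (x :: p') <= w.
  rewrite -(card_uniqP up'); apply: leq_trans (Hc x (in_setT x)).
  apply: subset_leq_card; apply/subsetP => z zp; rewrite inE.
  exact: path_connect pp' _ zp.
have [q [pq lq sq]] := mwalk pp'.
exists q; split; [done | split; [done | ]].
have : (size q <= n * w)%coq_nat.
  apply/leP; apply: leq_trans sq _; rewrite leq_mul2l; apply/orP; right.
  by move: sz => /=; lia.
move/le_INR; rewrite /Dfun -/n -/w; lra.
Qed.
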